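(* Let $G_{\mathrm{base}}$ be a forest on $L$ vertices with edge weights $W$, and let $f(z) = \exp(\tau(z))$ where $\tau(z) = az+b$ is an affine map ($a,b\in\mathbb{R}$). Then the mask $\mathbf{M} = [f(\mathrm{dist}_{G_{\mathrm{base}}}(i,j))]_{i,j=1,\dots,L}$ supports matrix-vector multiplication in time $O(L)$; in particular $(G_{\mathrm{base}},f)$ is tractable.
   Context: $\mathrm{dist}_{G_{\mathrm{base}}}(i,j)$ is the weighted shortest-path distance (sum of edge weights along the unique path) between $i$ and $j$. For vertices in different connected components of the forest the corresponding mask entries are taken to be $0$. A pair $(G_{\mathrm{base}},f)$ is tractable if $\mathbf{M}\mathbf{x}$ can be computed in $o(L^2)$ time for every $\mathbf{x}\in\mathbb{R}^L$. Time counts arithmetic operations, including evaluations of $\exp$. *)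

(* Defs.v *)
From HB Require Import structures.
From mathcomp Require Import all_boot all_order all_algebra.
From mathcomp Require Import reals sequences exp.
Set Implicit Arguments. Unset Strict Implicit. Unset Printing Implicit Defensive.
Import Order.TTheory GRing.Theory Num.Theory.
Local Open Scope ring_scope.

Definition simple_graph (L : nat) (e : rel 'I_L) : Prop :=
  (forall i j, e i j = e j i) /\ (forall i, ~~ e i i).

Definition has_cycle (L : nat) (e : rel 'I_L) : Prop :=
  exists (i : 'I_L) (p : seq 'I_L),
    [/\ (2 <= size p)%N, path e i p, uniq (i :: p) & e (last i p) i].

Definition forest (L : nat) (e : rel 'I_L) : Prop :=
  simple_graph e /\ ~ has_cycle e.

(* p is a simple path i -> j (the vertex sequence after i) *)
Definition spath (L : nat) (e : rel 'I_L) (i j : 'I_L) (p : seq 'I_L) : bool :=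
  [&& path e i p, last i p == j & uniq (i :: p)].

Definition pweight (R : nzRingType) (L : nat) (W : 'I_L -> 'I_L -> R)
    (i : 'I_L) (p : seq 'I_L) : R :=
  \sum_(k <- zip (belast i p) p) W k.1 k.2.

(* M is the mask [f(dist(i,j))]_{i,j}: dist(i,j) is the weight of the
   (unique, in a forest) path from i to j, and the entry is 0 when i and j
   lie in different components (no path). *)
Definition is_mask (R : nzRingType) (L : nat) (e : rel 'I_L)
    (W : 'I_L -> 'I_L -> R) (f : R -> R) (M : 'M[R]_L) : Prop :=
  forall i j,
    (forall p, spath e i j p -> M i j = f (pweight W i p)) /\
    ((forall p, ~~ spath e i j p) -> M i j = 0).

Inductive input (L : nat) : Type :=
  | InX of 'I_L
  | InA
  | InB
  | InW of 'I_L & 'I_L.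

(* Each instruction computes one new real value; arguments are indices of
   previously computed values. Each instruction costs one unit of time. *)
Inductive instr (L : nat) : Type :=
  | ILoad of input L
  | IConst of int
  | IAdd of nat & nat
  | ISub of nat & nat
  | IMul of nat & nat
  | IExp of nat.

Definition step (R : realType) (L : nat) (env : input L -> R)
    (vs : seq R) (ins : instr L) : R :=
  match ins with
  | ILoad k => env k
  | IConst z => z%:~R
  | IAdd n m => nth 0 vs n + nth 0 vs m
  | ISub n m => nth 0 vs n - nth 0 vs m
  | IMul n m => nth 0 vs n * nth 0 vs m
  | IExp n => expR (nth 0 vs n)
  end.

Definition run (R : realType) (L : nat) (env : input L -> R)
    (prog : seq (instr L)) : seq R :=
  foldl (fun vs ins => rcons vs (step env vs ins)) [::] prog.

Definition env_of (R : realType) (L : nat) (x : 'I_L -> R) (a b : R)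
    (W : 'I_L -> 'I_L -> R) (k : input L) : R :=
  match k with
  | InX i => x i
  | InA => a
  | InB => b
  | InW i j => W i j
  end.

(* Main.v *)
Require Import Defs.
From HB Require Import structures.
From mathcomp Require Import all_boot all_order all_algebra.
From mathcomp Require Import reals sequences exp.
From mathcomp Require Import zify boolp.
Set Implicit Arguments. Unset Strict Implicit. Unset Printing Implicit Defensive.
Import Order.TTheory GRing.Theory Num.Theory.
Local Open Scope ring_scope.

Definition leaf (L : nat) (e : rel 'I_L) (S : {set 'I_L}) (v : 'I_L) : Prop :=
  v \in S /\ forall w w', w \in S -> w' \in S -> e v w -> e v w' -> w = w'.

Lemma size_uniq_ord (L : nat) (s : seq 'I_L) : uniq s -> (size s <= L)%N.
Proof. by move=> /card_uniqP <-; rewrite -[X in (_ <= X)%N](card_ord L) max_card. Qed.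

Lemma leaf_from_path (L : nat) (e : rel 'I_L) (S : {set 'I_L}) :
  forest e -> forall n (i : 'I_L) (p : seq 'I_L), (L - size p <= n)%N -> i \in S ->
  all (fun k => k \in S) p -> path e i p -> uniq (i :: p) ->
  exists v, leaf e S v.
Proof.
move=> [[esym eirr] nocyc]; elim=> [|n IH] i p Hn iS pS pth un.
- have /= H := size_uniq_ord un; exfalso; move: Hn; rewrite leqn0 subn_eq0 leqNgt; apply/negP/negPn; exact: H.
case: (pickP [pred w | (w \in S) && e i w && (w \notin i :: p)]) => [w /= /andP[/andP[wS eiw] wn]|none].
  apply: (IH w (i :: p)) => //=.
  + have /= := size_uniq_ord un; lia.
  + by rewrite iS.
  + by rewrite esym eiw.
  + by rewrite wn.
have nb : forall w, w \in S -> e i w -> w \in p.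
  move=> w wS eiw; have := none w; rewrite /= wS eiw /= in_cons.
  case: eqP => [wi|_ /=]; first by rewrite wi (negbTE (eirr i)) in eiw.
  by move/negbFE.
exists i; split=> // w w' wS w'S eiw eiw'.
clear none; case: p pS pth un nb Hn => [|x p'] pS pth un nb Hn; first by have := nb w wS eiw.
have key : forall z, z \in S -> e i z -> z = x.
  move=> z zS eiz; have := nb z zS eiz; rewrite in_cons; case: eqP => // _ zp'.
  exfalso; apply: nocyc.
  case/splitPr: zp' pth un => s1 s2 pth un.
  exists i, (x :: rcons s1 z); split.
  + by rewrite /= size_rcons.
  + move: pth; rewrite /= cat_path rcons_path => /and3P[-> -> /=].
    by case/andP.
  + move: un; rewrite -cat_rcons -cat_cons -cat_cons cat_uniq.
    by case/andP.
  + by rewrite /= last_rcons esym.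
by rewrite (key w) // (key w').
Qed.

Lemma leaf_exists (L : nat) (e : rel 'I_L) (S : {set 'I_L}) :
  forest e -> S != set0 -> exists v, leaf e S v.
Proof.
move=> fe /set0Pn [i iS].
by apply: (leaf_from_path fe (n := L) (i := i) (p := [::])) => //=; rewrite subn0.
Qed.

Lemma avoid (L : nat) (e : rel 'I_L) (S : {set 'I_L}) (v i j : 'I_L) (p : seq 'I_L) :
  (forall x y, e x y = e y x) -> leaf e S v -> i \in S -> j != v ->
  spath e i j p -> all (fun k => k \in S) p -> v \notin p.
Proof.
move=> esym [vS lf] iS jv /and3P[pth /eqP lst un] pS; apply/negP => vp.
case/splitPr: vp pth lst un pS => s1 s2 pth lst un pS.
case: s2 pth lst un pS => [|w s3] pth lst un pS.
  by move: jv; rewrite -lst last_cat /= eqxx.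
move: pth; rewrite cat_path /= => /and3P[_ e1 /andP[e2 _]].
have z1 : last i s1 \in S.
  have := mem_last i s1; rewrite in_cons => /orP[/eqP->//|zs].
  by move: pS; rewrite all_cat => /andP[/allP/(_ _ zs)].
have wS : w \in S by move: pS; rewrite all_cat /= => /and3P[_ _ /andP[]].
have e1' : e v (last i s1) by rewrite esym.
have zw := lf _ _ z1 wS e1' e2.
move: un; rewrite -cat_cons cat_uniq => /and3P[_ /hasPn /(_ w)] + _.
rewrite !in_cons eqxx orbT => /(_ isT); rewrite -zw; have := mem_last i s1; rewrite in_cons => ->.
done.
Qed.

Lemma pweight_nil (R : nzRingType) (L : nat) (W : 'I_L -> 'I_L -> R) i :
  pweight W i [::] = 0.
Proof. by rewrite /pweight big_nil. Qed.

Lemma pweight_cons (R : nzRingType) (L : nat) (W : 'I_L -> 'I_L -> R) i u p :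
  pweight W i (u :: p) = W i u + pweight W u p.
Proof. by rewrite /pweight /= big_cons. Qed.

Lemma pweight_rcons (R : nzRingType) (L : nat) (W : 'I_L -> 'I_L -> R) i p v :
  pweight W i (rcons p v) = pweight W i p + W (last i p) v.
Proof.
elim: p i => [|x p IH] i /=.
  by rewrite pweight_cons !pweight_nil addr0 add0r.
by rewrite !pweight_cons IH addrA.
Qed.

Definition smask (R : realType) (L : nat) (e : rel 'I_L) (S : {set 'I_L})
  (W : 'I_L -> 'I_L -> R) (a : R) (G : 'I_L -> 'I_L -> R) : Prop :=
  forall i j, i \in S -> j \in S ->
    (forall p, spath e i j p -> all (fun k => k \in S) p -> G i j = expR (a * pweight W i p)) /\
    ((forall p, spath e i j p -> all (fun k => k \in S) p -> False) -> G i j = 0).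

Lemma mask_restrict (R : realType) (L : nat) (e : rel 'I_L) (S : {set 'I_L}) v W a
  (G : 'I_L -> 'I_L -> R) :
  (forall x y, e x y = e y x) -> leaf e S v -> smask e S W a G -> smask e (S :\ v) W a G.
Proof.
move=> esym lf H i j; rewrite !in_setD1 => /andP[iv iS] /andP[jv jS].
have [H1 H2] := H i j iS jS; split.
  move=> p sp pS; apply: H1 => //; apply/allP => k /(allP pS).
  by rewrite in_setD1 => /andP[].
move=> N; apply: H2 => p sp pS; apply: (N p sp).
have vp := avoid esym lf iS jv sp pS.
apply/allP => k kp; rewrite in_setD1 (allP pS) // andbT.
by apply/eqP => kv; move: vp; rewrite -kv kp.
Qed.

Lemma mask_vv (R : realType) (L : nat) (e : rel 'I_L) (S : {set 'I_L}) v W a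
  (G : 'I_L -> 'I_L -> R) : smask e S W a G -> v \in S -> G v v = 1.
Proof.
move=> H vS; have [H1 _] := H v v vS vS.
by rewrite (H1 [::]) // ?pweight_nil ?mulr0 ?expR0 // /spath /= eqxx.
Qed.

Lemma mask_iv (R : realType) (L : nat) (e : rel 'I_L) (S : {set 'I_L}) v u W a
  (G : 'I_L -> 'I_L -> R) i :
  simple_graph e -> leaf e S v -> u \in S -> e v u -> smask e S W a G ->
  i \in S :\ v -> G i v = G i u * expR (a * W u v).
Proof.
move=> [esym eirr] lf uS evu H; rewrite in_setD1 => /andP[iv iS].
have [vS lfv] := lf.
have uv : u != v by apply/eqP => uv; move: evu; rewrite uv (negbTE (eirr v)).
have [H1 H2] := H i u iS uS; have [H1' H2'] := H i v iS vS.
have [[p [sp pS]]|nop] := pselect (exists p, spath e i u p /\ all (fun k => k \in S) p).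
  have vp := avoid esym lf iS uv sp pS.
  move: (sp) => /and3P[pth /eqP lst un].
  rewrite (H1 p sp pS) (H1' (rcons p v)).
  - by rewrite pweight_rcons lst mulrDr expRD.
  - rewrite /spath rcons_path pth lst esym evu last_rcons eqxx /=.
    move: un => /= /andP[ip up]; rewrite mem_rcons in_cons negb_or iv ip rcons_uniq vp up.
    done.
  - by rewrite all_rcons vS pS.
rewrite H2 ?mul0r; last by move=> p sp pS; apply: nop; exists p.
apply: H2' => p /and3P[pth /eqP lst un] pS.
case/lastP: p pth lst un pS => [|p y] pth lst un pS.
  by move: iv; rewrite -lst /= eqxx.
move: lst; rewrite last_rcons => yv; subst y.
move: pth; rewrite rcons_path => /andP[pth ezv].
have zS : last i p \in S.
  have := mem_last i p; rewrite in_cons => /orP[/eqP->//|zs].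
  by move: pS; rewrite all_rcons => /andP[_ /allP/(_ _ zs)].
have zu : last i p = u by apply: lfv => //; rewrite esym.
apply: nop; exists p; split.
  by rewrite /spath pth zu eqxx /=; move: un; rewrite -rcons_cons rcons_uniq => /andP[].
by move: pS; rewrite all_rcons => /andP[].
Qed.

Lemma mask_vj (R : realType) (L : nat) (e : rel 'I_L) (S : {set 'I_L}) v u W a
  (G : 'I_L -> 'I_L -> R) j :
  simple_graph e -> leaf e S v -> u \in S -> e v u -> smask e S W a G ->
  j \in S :\ v -> G v j = expR (a * W v u) * G u j.
Proof.
move=> [esym eirr] lf uS evu H; rewrite in_setD1 => /andP[jv jS].
have [vS lfv] := lf.
have uv : u != v by apply/eqP => uv; move: evu; rewrite uv (negbTE (eirr v)).
have [H1 H2] := H u j uS jS; have [H1' H2'] := H v j vS jS.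
have [[p [sp pS]]|nop] := pselect (exists p, spath e u j p /\ all (fun k => k \in S) p).
  have vp := avoid esym lf uS jv sp pS.
  move: (sp) => /and3P[pth /eqP lst un].
  rewrite (H1 p sp pS) (H1' (u :: p)).
  - by rewrite pweight_cons mulrDr expRD.
  - rewrite /spath /= evu pth lst eqxx /=.
    by move: un => /= ->; rewrite in_cons negb_or eq_sym uv vp.
  - by rewrite /= uS pS.
rewrite H2 ?mulr0; last by move=> p sp pS; apply: nop; exists p.
apply: H2' => p /and3P[pth /eqP lst un] pS.
case: p pth lst un pS => [|y p] pth lst un pS.
  by move: jv; rewrite -lst /= eqxx.
move: pth => /= /andP[evy pth].
move: pS => /= /andP[yS pS].
have yu : y = u by apply: lfv.
subst y; apply: nop; exists p; split => //.
by move: lst => /= lst; rewrite /spath pth lst eqxx /=; move: un => /= /andP[_].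
Qed.

Lemma mask_iso_iv (R : realType) (L : nat) (e : rel 'I_L) (S : {set 'I_L}) v W a
  (G : 'I_L -> 'I_L -> R) i :
  smask e S W a G -> v \in S -> (forall w, w \in S -> ~~ e w v) ->
  i \in S :\ v -> G i v = 0.
Proof.
move=> H vS nb; rewrite in_setD1 => /andP[iv iS].
have [_ H2] := H i v iS vS; apply: H2 => p /and3P[pth /eqP lst un] pS.
case/lastP: p pth lst un pS => [|p y] pth lst un pS.
  by move: iv; rewrite -lst /= eqxx.
move: lst; rewrite last_rcons => yv; subst y.
move: pth; rewrite rcons_path => /andP[pth ezv].
have zS : last i p \in S.
  have := mem_last i p; rewrite in_cons => /orP[/eqP->//|zs].
  by move: pS; rewrite all_rcons => /andP[_ /allP/(_ _ zs)].
by move: (nb _ zS); rewrite ezv.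
Qed.

Lemma mask_iso_vj (R : realType) (L : nat) (e : rel 'I_L) (S : {set 'I_L}) v W a
  (G : 'I_L -> 'I_L -> R) j :
  smask e S W a G -> v \in S -> (forall w, w \in S -> ~~ e v w) ->
  j \in S :\ v -> G v j = 0.
Proof.
move=> H vS nb; rewrite in_setD1 => /andP[jv jS].
have [_ H2] := H v j vS jS; apply: H2 => p /and3P[pth /eqP lst un] pS.
case: p pth lst un pS => [|y p] pth lst un pS.
  by move: jv; rewrite -lst /= eqxx.
move: pth => /= /andP[evy pth].
move: pS => /= /andP[yS pS].
by move: (nb _ yS); rewrite evy.
Qed.

Definition runf (R : realType) (L : nat) (env : input L -> R) (vs : seq R)
  (prog : seq (instr L)) : seq R :=
  foldl (fun vs ins => rcons vs (step env vs ins)) vs prog.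

Lemma runf_cat (R : realType) (L : nat) (env : input L -> R) vs p1 p2 :
  runf env vs (p1 ++ p2) = runf env (runf env vs p1) p2.
Proof. by rewrite /runf foldl_cat. Qed.

Lemma size_runf (R : realType) (L : nat) (env : input L -> R) vs p :
  size (runf env vs p) = (size vs + size p)%N.
Proof.
elim: p vs => [|ins p IH] vs /=; first by rewrite addn0.
by rewrite /runf /= -/(runf _ _ _) IH size_rcons addSnnS.
Qed.

Lemma nth_runf (R : realType) (L : nat) (env : input L -> R) vs p m :
  (m < size vs)%N -> nth 0 (runf env vs p) m = nth 0 vs m.
Proof.
elim: p vs => [|ins p IH] vs //= mlt.
rewrite /runf /= -/(runf _ _ _) IH ?size_rcons 1?ltnW //.
by rewrite nth_rcons mlt.
Qed.

Lemma runf_cons_cat (R : realType) (L : nat) (env : input L -> R) vs ws ins p :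
  runf env (vs ++ ws) (ins :: p) = runf env (vs ++ rcons ws (step env (vs ++ ws) ins)) p.
Proof. by rewrite /runf /= rcons_cat. Qed.

Lemma nth_cat_size (R : realType) (vs ws : seq R) k :
  nth 0 (vs ++ ws) (size vs + k) = nth 0 ws k.
Proof. by rewrite nth_cat ltnNge leq_addr /= addKn. Qed.

Lemma nth_cat_size0 (R : realType) (vs ws : seq R) :
  nth 0 (vs ++ ws) (size vs) = nth 0 ws 0.
Proof. by rewrite -[size vs]addn0 nth_cat_size. Qed.

Lemma nth_cat_lt (R : realType) (vs ws : seq R) k :
  (k < size vs)%N -> nth 0 (vs ++ ws) k = nth 0 vs k.
Proof. by move=> h; rewrite nth_cat h. Qed.

Lemma runf_map (R : realType) (L : nat) (env : input L -> R) (T : Type) vs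
  (f : T -> instr L) (g : T -> R) s :
  (forall k ws, step env (vs ++ ws) (f k) = g k) ->
  runf env vs (map f s) = vs ++ map g s.
Proof.
move=> H; suff: forall ws, runf env (vs ++ ws) (map f s) = vs ++ ws ++ map g s.
  by move/(_ [::]); rewrite cats0.
elim: s => [|k s IH] ws; first by rewrite /runf /= cats0.
by rewrite [map f (k :: s)]/= runf_cons_cat H IH cat_rcons.
Qed.

Lemma runf_P1 (R : realType) (L : nat) (env : input L -> R) (vs : seq R) u v (px : 'I_L -> nat) :
  (px u < size vs)%N -> (px v < size vs)%N ->
  let n0 := size vs in
  let a := env (@InA L) in let w := env (InW u v) in let t := expR (a * w) in
  runf env vs [:: ILoad (@InA L); ILoad (InW u v); @IMul L n0 (n0 + 1); @IExp L (n0 + 2);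
                 @IMul L (n0 + 3) (px v); @IAdd L (px u) (n0 + 4)]
  = vs ++ [:: a; w; a * w; t; t * nth 0 vs (px v); nth 0 vs (px u) + t * nth 0 vs (px v)].
Proof.
move=> hu hv /=.
rewrite /runf /= -!cats1 -!catA /=.
by rewrite !nth_cat_size0 !nth_cat_size /= !nth_cat_lt.
Qed.

Lemma runf_P2 (R : realType) (L : nat) (env : input L -> R) (vs : seq R) (o q r pv : nat) :
  (o < size vs)%N -> (q < size vs)%N -> (r < size vs)%N -> (pv < size vs)%N ->
  runf env vs [:: @ISub L o q; @IMul L r (size vs); @IAdd L pv (size vs + 1)]
  = vs ++ [:: nth 0 vs o - nth 0 vs q; nth 0 vs r * (nth 0 vs o - nth 0 vs q);
              nth 0 vs pv + nth 0 vs r * (nth 0 vs o - nth 0 vs q)].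
Proof.
move=> ho hq hr hp.
rewrite /runf /= -!cats1 -!catA /=.
by rewrite !nth_cat_size0 !nth_cat_size /= !nth_cat_lt.
Qed.

Lemma core (R : realType) (L : nat) (e : rel 'I_L) : forest e ->
  forall n (S : {set 'I_L}), #|S| = n -> forall (px : 'I_L -> nat) (n0 : nat),
  (forall j, px j < n0)%N ->
  exists (prog : seq (instr L)) (out : 'I_L -> nat),
  (size prog <= 9 * n)%N /\ (forall i, i \in S -> out i < n0 + size prog)%N /\
  forall (env : input L -> R), (forall x y, env (InW x y) = env (InW y x)) ->
  forall vs : seq R, size vs = n0 ->
  forall G, smask e S (fun x y => env (InW x y)) (env (InA L)) G ->
  forall i, i \in S -> nth 0 (runf env vs prog) (out i) = \sum_(j in S) G i j * nth 0 vs (px j).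
Proof.
move=> fe; have [[esym eirr] _] := fe.
elim=> [|n IH] S cS px n0 hpx.
  exists [::], (fun _ => 0%N); split=> //; split=> [i|env _ vs _ G _ i];
  by rewrite (cards0_eq cS) inE.
have [v lf] : exists v, leaf e S v by apply: leaf_exists => //; rewrite -card_gt0 cS.
have [vS lfv] := lf.
have cS' : #|S :\ v| = n by move: cS; rewrite (cardsD1 v S) vS add1n => -[].
have sum_split : forall F : 'I_L -> R, \sum_(j in S) F j = F v + \sum_(j in S :\ v) F j.
  move=> F; rewrite (bigD1 v vS) /=; congr (_ + _); apply: eq_bigl => j.
  by rewrite in_setD1 andbC.
have [[u [uS evu]]|nonb] := pselect (exists u, u \in S /\ e v u).
  have uv : u != v by apply/eqP => uv; move: evu; rewrite uv (negbTE (eirr v)).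
  have uS' : u \in S :\ v by rewrite in_setD1 uv uS.
  pose px' := fun j => if j == u then (n0 + 5)%N else px j.
  have hpx' : forall j, (px' j < n0 + 6)%N.
    by move=> j; rewrite /px'; case: eqP => _; [lia | have := hpx j; lia].
  have [prog1 [out1 [sz1 [ob1 sem1]]]] := IH (S :\ v) cS' px' (n0 + 6)%N hpx'.
  pose n2 := (n0 + 6 + size prog1)%N.
  pose P1 := [:: ILoad (@InA L); ILoad (InW u v); @IMul L n0 (n0 + 1); @IExp L (n0 + 2);
                 @IMul L (n0 + 3) (px v); @IAdd L (px u) (n0 + 4)].
  pose P2 := [:: @ISub L (out1 u) (n0 + 4); @IMul L (n0 + 3) n2; @IAdd L (px v) (n2 + 1)].
  exists (P1 ++ prog1 ++ P2), (fun i => if i == v then (n2 + 2)%N else out1 i).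
  split; first by rewrite !size_cat /=; lia.
  split.
    move=> i iS; rewrite !size_cat /= /n2; case: eqP => [_|/eqP iv]; first lia.
    have := ob1 i; rewrite in_setD1 iv iS => /(_ isT); lia.
  move=> env hsym vs hvs G HG.
  set a := env (InA L); set w := env (InW u v); set t := expR (a * w).
  set X := fun j => nth 0 vs (px j).
  have e1 : runf env vs P1 = vs ++ [:: a; w; a * w; t; t * X v; X u + t * X v].
    by rewrite /P1 -hvs runf_P1 // hvs.
  set vs1 := vs ++ _ in e1.
  have hvs1 : size vs1 = (n0 + 6)%N by rewrite size_cat hvs.
  have X1 : forall j, nth 0 vs1 (px' j) = if j == u then X u + t * X v else X j.
    move=> j; rewrite /px'; case: eqP => _.
      by rewrite -hvs nth_cat_size.
    by rewrite nth_cat_lt // hvs.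
  have HG' := mask_restrict esym lf HG.
  have s1 := sem1 env hsym vs1 hvs1 G HG'.
  have sum' : forall i, \sum_(j in S :\ v) G i j * nth 0 vs1 (px' j)
                = G i u * t * X v + \sum_(j in S :\ v) G i j * X j.
    move=> i; rewrite (bigD1 u uS') /= [in RHS](bigD1 u uS') /= X1 eqxx.
    rewrite addrA mulrDr mulrA [G i u * X u + _]addrC; congr (_ + _).
    by apply: eq_bigr => j /andP[_ ju]; rewrite X1 (negbTE ju).
  move=> i iS.
  rewrite runf_cat e1 runf_cat.
  set vs2 := runf env vs1 prog1.
  have hvs2 : size vs2 = n2 by rewrite size_runf hvs1.
  have ou : (out1 u < size vs2)%N by rewrite hvs2; exact: ob1.
  have pv : (px v < size vs2)%N by rewrite hvs2 /n2; have := hpx v; lia.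
  have e2 : runf env vs2 P2 = vs2 ++ [:: nth 0 vs2 (out1 u) - nth 0 vs2 (n0 + 4);
       nth 0 vs2 (n0 + 3) * (nth 0 vs2 (out1 u) - nth 0 vs2 (n0 + 4));
       nth 0 vs2 (px v) + nth 0 vs2 (n0 + 3) * (nth 0 vs2 (out1 u) - nth 0 vs2 (n0 + 4))].
    rewrite /P2 -hvs2 runf_P2 // hvs2 /n2; lia.
  rewrite e2 sum_split.
  case: eqP => [->|/eqP iv].
    rewrite -hvs2 nth_cat_size /=.
    have -> : nth 0 vs2 (n0 + 4) = t * X v.
      rewrite /vs2 nth_runf; last by rewrite hvs1; lia.
      by rewrite /vs1 -hvs nth_cat_size.
    have -> : nth 0 vs2 (n0 + 3) = t.
      rewrite /vs2 nth_runf; last by rewrite hvs1; lia.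
      by rewrite /vs1 -hvs nth_cat_size.
    have -> : nth 0 vs2 (px v) = X v.
      rewrite /vs2 nth_runf; last by rewrite hvs1; have := hpx v; lia.
      by rewrite /vs1 nth_cat_lt // hvs.
    rewrite s1 // sum' (mask_vv HG' uS') (mask_vv HG vS) mul1r.
    rewrite [in RHS](eq_bigr (fun j => t * (G u j * X j))); last first.
      move=> j jS; rewrite (mask_vj (conj esym eirr) lf uS evu HG jS) hsym -mulrA.
      by [].
    by rewrite -mulr_sumr mul1r addrAC subrr add0r.
  have iS' : i \in S :\ v by rewrite in_setD1 iv iS.
  rewrite nth_cat_lt; last by rewrite hvs2; exact: ob1.
  rewrite s1 // sum' (mask_iv (conj esym eirr) lf uS evu HG iS').
  by [].
have nb1 : forall w, w \in S -> ~~ e v w.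
  by move=> w wS; apply/negP => evw; apply: nonb; exists w.
have nb2 : forall w, w \in S -> ~~ e w v by move=> w wS; rewrite esym nb1.
have [prog1 [out1 [sz1 [ob1 sem1]]]] := IH (S :\ v) cS' px n0 hpx.
exists prog1, (fun i => if i == v then px v else out1 i).
split; first lia.
split.
  move=> i iS; case: eqP => [_|/eqP iv]; first by have := hpx v; lia.
  by apply: ob1; rewrite in_setD1 iv iS.
move=> env hsym vs hvs G HG i iS; rewrite sum_split.
have HG' := mask_restrict esym lf HG.
case: eqP => [->|/eqP iv].
  rewrite nth_runf ?hvs // (mask_vv HG vS) mul1r big1 ?addr0 //.
  by move=> j jS; rewrite (mask_iso_vj HG vS nb1 jS) mul0r.
have iS' : i \in S :\ v by rewrite in_setD1 iv iS.
by rewrite (mask_iso_iv HG vS nb2 iS') mul0r add0r; apply: sem1.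
Qed.

Lemma run_runf (R : realType) (L : nat) (env : input L -> R) p :
  run env p = runf env [::] p.
Proof. by []. Qed.

Theorem lemma3p5 (R : realType) :
  exists C : nat, forall (L : nat) (e : rel 'I_L), forest e ->
    exists (prog : seq (instr L)) (out : 'I_L -> nat),
      (size prog <= C * L)%N /\
      forall (W : 'I_L -> 'I_L -> R) (a b : R) (x : 'I_L -> R) (M : 'M[R]_L),
        (forall i j, W i j = W j i) ->
        is_mask e W (fun z => expR (a * z + b)) M ->
        forall i : 'I_L,
          nth 0 (run (env_of x a b W) prog) (out i) = \sum_(j < L) M i j * x j.
Proof.
exists 13%N => L e fe.
have [L0|Lpos] := eqVneq L 0%N.
  subst L; exists [::], (fun _ => 0%N); split => // W a b x M _ _ i.
  by case: i.
pose P0 := [:: ILoad (@InB L); @IExp L 0] ++ map (fun j => ILoad (InX j)) (enum 'I_L).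
pose px := fun j : 'I_L => (2 + j)%N.
have hpx : forall j, (px j < 2 + L)%N by move=> j; rewrite /px ltn_add2l.
have [progc [outc [szc [obc semc]]]] :=
  @core R L e fe #|[set: 'I_L]| [set: 'I_L] erefl px (2 + L)%N hpx.
pose n2 := (2 + L + size progc)%N.
pose P3 := map (fun i => @IMul L 1 (outc i)) (enum 'I_L).
exists (P0 ++ progc ++ P3), (fun i => (n2 + i)%N).
split.
  move: szc; rewrite cardsT card_ord !size_cat !size_map -!enumT size_enum_ord /=.
  move: Lpos; rewrite -lt0n; lia.
move=> W a b x M Wsym HM i.
set env := env_of x a b W.
rewrite run_runf runf_cat runf_cat.
have e1 : runf env [::] P0 = [:: b; expR b] ++ map x (enum 'I_L).
  by rewrite /P0 runf_cat (runf_map (g := x)).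
rewrite e1; set vs1 := _ ++ _.
have hvs1 : size vs1 = (2 + L)%N by rewrite size_cat size_map size_enum_ord.
have X1 : forall j, nth 0 vs1 (px j) = x j.
  move=> j; rewrite /vs1 /px (nth_cat_size [:: b; expR b]) (nth_map j) ?size_enum_ord //.
  by rewrite nth_ord_enum.
pose G := fun i j => M i j * expR (- b).
have HG : smask e [set: 'I_L] (fun x0 y => env (InW x0 y)) (env (InA L)) G.
  move=> j k _ _; have [H1 H2] := HM j k; split.
    by move=> p sp _; rewrite /G (H1 p sp) -expRD addrK.
  move=> np; rewrite /G H2 ?mul0r // => p; apply/negP => sp; apply: (np p sp).
  by apply/allP => k' _; rewrite in_setT.
have s1 := semc env Wsym vs1 hvs1 G HG i (in_setT i).
set vs2 := runf env vs1 progc.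
have hvs2 : size vs2 = n2 by rewrite size_runf hvs1.
have ob : forall k, (outc k < size vs2)%N by move=> k; rewrite hvs2; apply: obc; rewrite in_setT.
have one : (1 < size vs2)%N by rewrite hvs2 /n2; lia.
rewrite (runf_map (g := fun k => nth 0 vs2 1 * nth 0 vs2 (outc k))); last first.
  by move=> k ws /=; rewrite !nth_cat_lt.
rewrite -hvs2 nth_cat_size (nth_map i) ?size_enum_ord // nth_ord_enum s1.
have -> : nth 0 vs2 1 = expR b by rewrite /vs2 nth_runf ?hvs1.
rewrite mulr_sumr; apply: eq_big => [j|j _]; first by rewrite in_setT.
by rewrite X1 /G [M i j * _]mulrC !mulrA -expRD subrr expR0 mul1r.
Qed.
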